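(* For each $i\in\{1,\dots,m\}$ let $A_i:\mathbb{R}^n\rightrightarrows\mathbb{R}^n$ be a maximally monotone symmetric linear relation. Then the infimal convolution $f=q_{A_1}\,\square\cdots\square\,q_{A_m}$ is a generalized linear-quadratic function and $$\partial f=\Big(\sum_{i=1}^mA_i^{-1}\Big)^{-1},$$ the parallel sum of the $A_i$.
   Context: A linear relation is an operator $\mathbb{R}^n\rightrightarrows\mathbb{R}^n$ whose graph is a linear subspace; monotone: $\langle x^*-y^*,x-y\rangle\ge0$ on the graph; maximally monotone: no monotone operator with strictly larger graph; symmetric: $\langle x,y^*\rangle=\langle y,x^*\rangle$ for all $(x,x^* ),(y,y^* )$ in the graph. Inverses are set-valued; sums are pointwise Minkowski sums. For a monotone linear relation $B$, $q_B(x)=\frac12\langle x,Bx\rangle$ on $\operatorname{dom}B$ and $\infty$ elsewhere. Infimal convolution: $(g\,\square\,h)(x)=\inf_y\{g(y)+h(x-y)\}$. $\partial$ denotes the Fenchel subdifferential. A generalized linear-quadratic function is one of the form $x\mapsto\frac12\langle x-a,B(x-a)\rangle+\langle b,x\rangle+c$ with $B$ a linear relation. *)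

(* Defs.v *)
From HB Require Import structures.
From mathcomp Require Import all_boot all_order all_algebra.
From mathcomp Require Import boolp classical_sets reals ereal.
Set Implicit Arguments. Unset Strict Implicit. Unset Printing Implicit Defensive.
Import Order.TTheory GRing.Theory Num.Theory.
Local Open Scope classical_set_scope.
Local Open Scope ring_scope.

Section Defs.
Variables (R : realType) (n : nat).
Notation V := 'rV[R]_n.

Definition dotv (x y : V) : R := \sum_(i < n) x ord0 i * y ord0 i.

(* set-valued operators R^n =>> R^n; A x xs means xs \in A x, i.e. (x,xs) in gra A *)
Definition oper := V -> set V.

Definition linear_relation (A : oper) : Prop :=
  A 0 0 /\ forall (a : R) x y xs ys, A x xs -> A y ys -> A (a *: x + y) (a *: xs + ys).

Definition monotone (A : oper) : Prop :=
  forall x y xs ys, A x xs -> A y ys -> 0 <= dotv (xs - ys) (x - y).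

Definition maximally_monotone (A : oper) : Prop :=
  monotone A /\
  forall B : oper, monotone B -> (forall x xs, A x xs -> B x xs) ->
    forall x xs, B x xs -> A x xs.

Definition symmetric_op (A : oper) : Prop :=
  forall x y xs ys, A x xs -> A y ys -> dotv x ys = dotv y xs.

Definition inv_op (A : oper) : oper := fun y x => A x y.

Definition add_op (A B : oper) : oper :=
  fun x z => exists a b, A x a /\ B x b /\ z = a + b.

Definition zero_op : oper := fun _ z => z = 0.

Definition sum_op (m : nat) (A : 'I_m -> oper) : oper :=
  \big[add_op/zero_op]_(i < m) A i.

(* q_B x = 1/2 <x, Bx> on dom B, +oo elsewhere (for monotone linear relations
   <x, x*> does not depend on the choice of x* in B x) *)
Definition qform (B : oper) (x : V) : \bar R :=
  if pselect (exists xs, B x xs)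
  then ((1/2) * dotv x (xget 0 (B x)))%:E
  else +oo%E.

Definition infconv (g h : V -> \bar R) : V -> \bar R :=
  fun x => ereal_inf [set (g y + h (x - y)%R)%E | y in [set: V]].

Definition ind0 : V -> \bar R := fun x => if x == 0 then 0%E else +oo%E.

Definition infconv_fam (m : nat) (g : 'I_m -> V -> \bar R) : V -> \bar R :=
  \big[infconv/ind0]_(i < m) g i.

Definition subdiff (f : V -> \bar R) : oper :=
  fun x xs => f x \is a fin_num /\
    forall y, (f x + (dotv xs (y - x))%:E <= f y)%E.

Definition gen_lin_quad (f : V -> \bar R) : Prop :=
  exists (B : oper) (a b : V) (c : R),
    linear_relation B /\ monotone B /\
    forall x, f x = (qform B (x - a)%R + (dotv b x + c)%:E)%E.

End Defs.

(* Main.v *)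
Require Import Defs.
From HB Require Import structures.
From mathcomp Require Import all_boot all_order all_algebra.
From mathcomp Require Import boolp classical_sets reals ereal.
From mathcomp Require Import ring lra zify.
Set Implicit Arguments. Unset Strict Implicit. Unset Printing Implicit Defensive.
Import Order.TTheory GRing.Theory Num.Theory.
Local Open Scope ring_scope.

Section Aux.
Variables (R : realType) (n : nat).
Notation V := 'rV[R]_n.
Implicit Types (x y z u v w : V).

Lemma dotvC x y : dotv x y = dotv y x.
Proof. by apply: eq_bigr => i _; rewrite mulrC. Qed.
Lemma dotvDl x y z : dotv (x + y) z = dotv x z + dotv y z.
Proof. by rewrite /dotv -big_split; apply: eq_bigr => i _; rewrite mxE mulrDl. Qed.
Lemma dotvZl (a : R) x z : dotv (a *: x) z = a * dotv x z.
Proof. by rewrite /dotv mulr_sumr; apply: eq_bigr => i _; rewrite mxE mulrA. Qed.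
Lemma dotvNl x z : dotv (- x) z = - dotv x z.
Proof. by rewrite -scaleN1r dotvZl mulN1r. Qed.
Lemma dotvBl x y z : dotv (x - y) z = dotv x z - dotv y z.
Proof. by rewrite dotvDl dotvNl. Qed.
Lemma dotv0l z : dotv 0 z = 0.
Proof. by rewrite -(scale0r 0) dotvZl mul0r. Qed.
Lemma dotvDr x y z : dotv z (x + y) = dotv z x + dotv z y.
Proof. by rewrite dotvC dotvDl !(dotvC z). Qed.
Lemma dotvZr (a : R) x z : dotv z (a *: x) = a * dotv z x.
Proof. by rewrite dotvC dotvZl dotvC. Qed.
Lemma dotvNr x z : dotv z (- x) = - dotv z x.
Proof. by rewrite dotvC dotvNl dotvC. Qed.
Lemma dotvBr x y z : dotv z (x - y) = dotv z x - dotv z y.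
Proof. by rewrite dotvDr dotvNr. Qed.
Lemma dotv0r z : dotv z 0 = 0.
Proof. by rewrite dotvC dotv0l. Qed.
Lemma dotv_ge0 x : 0 <= dotv x x.
Proof. by apply: sumr_ge0 => i _; rewrite -expr2 sqr_ge0. Qed.
Lemma dotv_eq0 x : dotv x x = 0 -> x = 0.
Proof.
move=> h; apply/rowP => i; rewrite mxE.
have : x ord0 i * x ord0 i = 0.
  apply/eqP; move: h; rewrite /dotv => /eqP; rewrite psumr_eq0.
    by move/allP => /(_ i (mem_index_enum _)) /=.
  by move=> j _; rewrite -expr2 sqr_ge0.
by move/eqP; rewrite mulf_eq0 orbb => /eqP.
Qed.
Lemma dotv_mx x y : dotv x y = (x *m y^T) ord0 ord0.
Proof. by rewrite mxE; apply: eq_bigr => i _; rewrite mxE. Qed.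

Definition subsp (W : set V) := W 0 /\ forall (a : R) x y, W x -> W y -> W (a *: x + y).

Lemma subsp_mx (W : set V) : subsp W -> exists M : 'M[R]_n, forall v, (v <= M)%MS <-> W v.
Proof.
case=> W0 WC.
have WD x y : W x -> W y -> W (x + y) by move=> *; rewrite -[x]scale1r; apply: WC.
have WZ (a : R) x : W x -> W (a *: x) by move=> *; rewrite -[_ *: _]addr0; apply: WC.
pose P (M : 'M[R]_n) := forall v : V, (v <= M)%MS -> W v.
suff: forall d (M : 'M[R]_n), P M -> (n - \rank M <= d)%N ->
   exists M', P M' /\ forall w, W w -> (w <= M')%MS.
  move=> /(_ n 0); case.
  - by move=> v; rewrite submx0 => /eqP ->.
  - by rewrite leq_subr.
  by move=> M' [h1 h2]; exists M' => v; split; [apply: h1 | apply: h2].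
elim=> [|d IH] M PM hd.
  exists M; split => // w _; apply: submx_full.
  by rewrite /row_full eqn_leq rank_leq_col /= -subn_eq0 -leqn0.
have [all|] := pselect (forall w, W w -> (w <= M)%MS); first by exists M.
move=> /existsNP [w /not_implyP [Ww nwM]].
have PM' : P (M + w)%MS.
  move=> v /sub_addsmxP [[u1 u2] /= ->]; apply: WD.
    by apply: PM; apply: submxMl.
  have : (u2 *m w <= w)%MS by apply: submxMl.
  by case/sub_rVP => a ->; apply: WZ.
apply: (IH _ PM').
have hlt : (\rank M < \rank (M + w)%MS)%N.
  rewrite (ltn_leqif (mxrank_leqif_sup (addsmxSl M w))).
  apply/negP; rewrite addsmx_sub => /andP [_ h]; exact: nwM h.
have := rank_leq_col (M + w)%MS; lia.
Qed.

Lemma orth_closed (W : set V) : subsp W -> forall u,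
  (forall v, (forall w, W w -> dotv v w = 0) -> dotv v u = 0) -> W u.
Proof.
move=> /subsp_mx [M hM] u hu.
pose K := kermx M^T.
have hK v : (v <= K)%MS -> dotv v u = 0.
  move=> /sub_kermxP vK; apply: hu => w /hM /submxP [D ->].
  by rewrite dotv_mx trmx_mul mulmxA vK mul0mx mxE.
have uK : (u <= kermx K^T)%MS.
  apply/sub_kermxP; apply/rowP => i; rewrite !mxE.
  rewrite -[RHS](hK (row i K)) ?row_sub // dotvC /dotv.
  by apply: eq_bigr => j _; rewrite !mxE.
apply/hM.
have MK : (M <= kermx K^T)%MS.
  by apply/sub_kermxP; rewrite -[M]trmxK -trmx_mul mulmx_ker trmx0.
have := mxrank_leqif_sup MK.
have -> : \rank (kermx K^T) = \rank M.
  rewrite mxrank_ker mxrank_tr mxrank_ker mxrank_tr.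
  have := rank_leq_col M; lia.
move=> [_]; rewrite eqxx => /esym h; exact: submx_trans uK h.
Qed.


Implicit Types (C : oper R n).

Lemma lin_add C x y xs ys : linear_relation C -> C x xs -> C y ys -> C (x + y) (xs + ys).
Proof. by case=> _ h hx hy; have := h 1 _ _ _ _ hx hy; rewrite !scale1r. Qed.
Lemma lin_scale C (a : R) x xs : linear_relation C -> C x xs -> C (a *: x) (a *: xs).
Proof. by case=> h0 h hx; have := h a _ _ _ _ hx h0; rewrite !addr0. Qed.
Lemma lin_sub C x y xs ys : linear_relation C -> C x xs -> C y ys -> C (x - y) (xs - ys).
Proof.
move=> hl hx hy; apply: lin_add => //.
by rewrite -!scaleN1r; apply: lin_scale.
Qed.
Lemma mono_ge0 C x xs : linear_relation C -> monotone C -> C x xs -> 0 <= dotv xs x.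
Proof. by move=> [h0 _] hm hx; have := hm _ _ _ _ hx h0; rewrite !subr0. Qed.

Lemma maxm_add C x y : maximally_monotone C ->
  (forall z zs, C z zs -> 0 <= dotv (y - zs) (x - z)) -> C x y.
Proof.
move=> [hm hmax] hxy.
pose B : oper R n := fun a b => C a b \/ (a = x /\ b = y).
apply: (hmax B) => [a b c d [ha|[-> ->]] [hc|[-> ->]]||]; try by left.
- exact: hm.
- by rewrite -(opprB y c) -(opprB x a) dotvNl dotvNr opprK; apply: hxy.
- by apply: hxy.
- by rewrite !subrr dotv0l.
- by right.
Qed.

Lemma surj_max C : monotone C ->
  (forall u, exists x xs, C x xs /\ x + xs = u) -> maximally_monotone C.
Proof.
move=> hm hs; split => // B hB hCB x xs hx.
have [z [zs [hz e]]] := hs (x + xs).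
have := hB _ _ _ _ hx (hCB _ _ hz).
have -> : xs - zs = - (x - z).
  by apply/eqP; rewrite -addr_eq0 addrC addrACA -opprD e subrr.
rewrite dotvNl oppr_ge0 => hle.
have h0 : dotv (x - z) (x - z) = 0 by apply/eqP; rewrite eq_le hle dotv_ge0.
have ex := dotv_eq0 h0; move/eqP: ex; rewrite subr_eq0 => /eqP ex.
have exs : xs = zs by move: e; rewrite ex => /addrI.
by rewrite ex exs.
Qed.

Lemma inv_lin C : linear_relation C -> linear_relation (inv_op C).
Proof. by case=> h0 h; split => // a x y xs ys hx hy; apply: h. Qed.
Lemma inv_mono C : monotone C -> monotone (inv_op C).
Proof. by move=> hm x y xs ys hx hy; rewrite dotvC; apply: hm. Qed.
Lemma inv_max C : maximally_monotone C -> maximally_monotone (inv_op C).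
Proof.
case=> hm hmax; split; first exact: inv_mono.
move=> B hB hCB x xs hx; apply: (hmax (inv_op B)).
- exact: inv_mono.
- by move=> a b hab; apply: hCB.
- exact: hx.
Qed.

Lemma ranR C v : linear_relation C -> maximally_monotone C ->
  (forall z, C z 0 -> dotv v z = 0) -> exists x, C x v.
Proof.
move=> hl hM hv.
have hsub : subsp (fun y => exists x, C x y).
  split; first by exists 0; case: hl.
  by move=> a x y [x1 h1] [y1 h2]; exists (a *: x1 + y1); case: hl => _; apply.
apply: (orth_closed hsub) => z hz.
suff : C z 0 by move/hv; rewrite dotvC.
apply: maxm_add => // x xs hx.
rewrite sub0r dotvNl dotvBr (dotvC xs z) (hz xs (ex_intro _ x hx)) sub0r opprK.
exact: mono_ge0 hl hM.1 hx.
Qed.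

Lemma domR C v : linear_relation C -> maximally_monotone C ->
  (forall zs, C 0 zs -> dotv v zs = 0) -> exists xs, C v xs.
Proof.
move=> hl hM hv; apply: (ranR (C := inv_op C)) => //.
- exact: inv_lin.
- exact: inv_max.
Qed.

Lemma tlemma (a b : R) : (forall t, 0 <= a - t * b) -> b = 0.
Proof.
move=> h; have [//|hb] := eqVneq b 0; exfalso.
have := h ((a + 1) / b); rewrite divfK //.
have -> : a - (a + 1) = -1 by ring.
by rewrite oppr_ge0 ler10.
Qed.

Lemma ortho C z y : linear_relation C -> monotone C -> symmetric_op C ->
  C z y -> dotv z y = 0 -> forall x xs, C x xs -> dotv x y = 0.
Proof.
move=> hl hm hs hz hzy x xs hx.
have key : forall t, 0 <= dotv xs x - t * (2 * dotv x y).
  move=> t; have := hm _ _ _ _ hx (lin_scale t hl hz).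
  rewrite !dotvBl !dotvBr !dotvZl !dotvZr (dotvC y z) hzy.
  rewrite (dotvC xs z) -(hs _ _ _ _ hx hz) (dotvC y x).
  set p := dotv xs x; set q := dotv x y; move=> hh.
  have -> : p - t * (2 * q) = p - t * q - (t * q - t * (t * 0)) by ring.
  exact: hh.
have := tlemma key; move/eqP; rewrite mulf_eq0 pnatr_eq0 /= => /eqP //.
Qed.

Definition qdef C x : R := 1/2 * dotv x (xget 0 (C x)).

Lemma qform_val C x y : linear_relation C -> symmetric_op C -> C x y ->
  qform C x = (1/2 * dotv x y)%:E.
Proof.
move=> hl hs hxy; rewrite /qform; case: pselect => [hex|[]]; last by exists y.
have hg := xgetPex 0 hex.
have h0 := lin_sub hl hg hxy; rewrite subrr in h0.
have := hs _ _ _ _ hxy h0; rewrite dotv0l dotvBr => /eqP; rewrite subr_eq0 => /eqP ->.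
by [].
Qed.

Lemma qform_nodom C x : ~ (exists xs, C x xs) -> qform C x = +oo%E.
Proof. by move=> h; rewrite /qform; case: pselect. Qed.


Lemma qform_neq_ny C x : qform C x != -oo%E.
Proof. by rewrite /qform; case: pselect. Qed.

Lemma sub_ge C x y : linear_relation C -> monotone C -> symmetric_op C -> C x y ->
  forall z, (qform C x + (dotv y (z - x))%:E <= qform C z)%E.
Proof.
move=> hl hm hs hxy z; rewrite (qform_val hl hs hxy).
case: (pselect (exists zs, C z zs)) => [[zs hz]|hn]; last by rewrite qform_nodom // leey.
rewrite (qform_val hl hs hz) -EFinD lee_fin.
have h1 := hm _ _ _ _ hz hxy; have h2 := hs _ _ _ _ hxy hz.
move: h1; rewrite !dotvBl !dotvBr (dotvC zs z) (dotvC zs x) (dotvC y z) (dotvC y x) h2.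
lra.
Qed.

Lemma add3ACA (p q r a b c : 'rV[R]_n) : p + q + r + (a + b + c) = p + a + (q + b) + (r + c).
Proof. by rewrite addrACA (addrACA p q a b). Qed.

Definition inC C := linear_relation C /\ maximally_monotone C /\ symmetric_op C.
Definition par (A B : oper R n) : oper R n := inv_op (add_op (inv_op A) (inv_op B)).

Lemma parE A B x y : par A B x y = exists a b, A a y /\ B b y /\ x = a + b.
Proof. by []. Qed.

Lemma par_inC A B : inC A -> inC B -> inC (par A B).
Proof.
move=> [lA [mA sA]] [lB [mB sB]].
have lP : linear_relation (par A B).
  split; first by exists 0, 0; rewrite addr0; split; [case: lA|split; [case: lB|]].
  move=> al x y xs ys [a1 [b1 [h1 [h2 ->]]]] [a2 [b2 [h3 [h4 ->]]]].
  exists (al *: a1 + a2), (al *: b1 + b2); split; first by case: lA => _; apply.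
  split; first by case: lB => _; apply.
  by rewrite scalerDr addrACA.
have moP : monotone (par A B).
  move=> x y xs ys [a1 [b1 [h1 [h2 ->]]]] [a2 [b2 [h3 [h4 ->]]]].
  rewrite opprD addrACA dotvDr; apply: addr_ge0; [exact: mA.1|exact: mB.1].
split => //; split; last first.
  move=> x y xs ys [a1 [b1 [h1 [h2 ->]]]] [a2 [b2 [h3 [h4 ->]]]].
  by rewrite !dotvDl (sA _ _ _ _ h1 h3) (sB _ _ _ _ h2 h4).
apply: surj_max => // u.
pose W : set 'rV[R]_n := fun u => exists x1 x2 y, A x1 y /\ B x2 y /\ u = x1 + x2 + y.
have hW : subsp W.
  split; first by exists 0, 0, 0; rewrite !addr0; split; [case: lA|split; [case: lB|]].
  move=> al x y [a1 [b1 [y1 [h1 [h2 ->]]]]] [a2 [b2 [y2 [h3 [h4 ->]]]]].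
  exists (al *: a1 + a2), (al *: b1 + b2), (al *: y1 + y2).
  split; first by case: lA => _; apply.
  split; first by case: lB => _; apply.
  by rewrite !scalerDr add3ACA.
have : W u.
  apply: (orth_closed hW) => v hv.
  suff -> : v = 0 by rewrite dotv0l.
  have [x1 hx1] : exists x1, A x1 v.
    apply: ranR => // z hz; apply: hv; exists z, 0, 0; rewrite !addr0.
    by split => //; split => //; case: lB.
  have [x2 hx2] : exists x2, B x2 v.
    apply: ranR => // z hz; apply: hv; exists 0, z, 0; rewrite !addr0 add0r.
    by split => //; case: lA.
  have := hv (x1 + x2 + v) (ex_intro _ x1 (ex_intro _ x2 (ex_intro _ v (conj hx1 (conj hx2 erefl))))).
  rewrite !dotvDr => h.
  have g1 := mono_ge0 lA mA.1 hx1; have g2 := mono_ge0 lB mB.1 hx2.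
  have g3 := dotv_ge0 v.
  apply: dotv_eq0; lra.
move=> [x1 [x2 [y [h1 [h2 ->]]]]]; exists (x1 + x2), y; split => //.
by exists x1, x2.
Qed.

Lemma dom_sum A B x1 x2 x1s x2s : inC A -> inC B -> A x1 x1s -> B x2 x2s ->
  exists y, par A B (x1 + x2) y.
Proof.
move=> hA hB h1 h2; have [lP [MP _]] := par_inC hA hB.
case: hA => [lA [mA sA]]; case: hB => [lB [mB sB]].
apply: domR => // zs [a [b [ha [hb e]]]].
have ea : a = - b by apply/eqP; rewrite -addr_eq0 -e.
have g1 := mono_ge0 lA mA.1 ha; have g2 := mono_ge0 lB mB.1 hb.
rewrite ea dotvNr in g1.
have hb0 : dotv b zs = 0 by rewrite dotvC; lra.
have ha0 : dotv a zs = 0 by rewrite ea dotvNl hb0 oppr0.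
rewrite dotvDl (ortho lA mA.1 sA ha ha0 h1) (ortho lB mB.1 sB hb hb0 h2).
by rewrite addr0.
Qed.

Lemma infconv2 A B : inC A -> inC B ->
  infconv (qform A) (qform B) = qform (par A B).
Proof.
move=> hA hB; have [lP [MP sP]] := par_inC hA hB.
have [lA [mA sA]] := hA; have [lB [mB sB]] := hB.
apply: funext => x; rewrite /infconv.
case: (pselect (exists y, par A B x y)) => [[y hP]|hn]; last first.
  rewrite qform_nodom //; apply/le_anti; rewrite leey /=.
  apply: le_ereal_inf_tmp => e [z _ <-].
  case: (pselect (exists zs, A z zs)) => [[zs hz]|hnz]; last first.
    by rewrite (qform_nodom hnz) addye // qform_neq_ny.
  case: (pselect (exists zs, B (x - z) zs)) => [[zs' hz']|hnz']; last first.
    by rewrite (qform_nodom hnz') addey // qform_neq_ny.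
  have [y hy] := dom_sum hA hB hz hz'.
  by exfalso; apply: hn; exists y; move: hy; rewrite addrC subrK.
rewrite (qform_val lP sP hP).
case: hP => [a [b [ha [hb ex]]]].
apply/le_anti/andP; split.
  apply: ereal_inf_lbound; exists a => //.
  rewrite ex (addrC a b) addrK (qform_val lA sA ha) (qform_val lB sB hb) -EFinD.
  by congr EFin; rewrite dotvDl; ring.
apply: le_ereal_inf_tmp => e [z _ <-].
have h1 := sub_ge lA mA.1 sA ha z; have h2 := sub_ge lB mB.1 sB hb (x - z).
apply: le_trans (leeD h1 h2).
rewrite (qform_val lA sA ha) (qform_val lB sB hb) -!EFinD lee_fin ex.
rewrite !dotvBr !dotvDr !dotvDl (dotvC y a) (dotvC y b) (dotvC y z); lra.
Qed.

Lemma subdiff_q C : inC C -> subdiff (qform C) = C.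
Proof.
move=> [hl [hM hs]]; have hm := hM.1.
apply: funext => x; apply: funext => y; apply: propext; split.
  case=> hfin hsub.
  have [xs hxs] : exists xs, C x xs.
    by apply: contrapT => hn; move: hfin; rewrite qform_nodom.
  apply: maxm_add => // z zs hz.
  have := hsub z; rewrite (qform_val hl hs hxs).
  case: (pselect (exists zs, C z zs)) => [_|[]]; last by exists zs.
  rewrite (qform_val hl hs hz) -EFinD lee_fin => h1.
  have := sub_ge hl hm hs hz x.
  rewrite (qform_val hl hs hxs) (qform_val hl hs hz) -EFinD lee_fin => h2.
  move: h1 h2; rewrite -(opprB x z) dotvNr dotvBl; lra.
move=> hxy; split; last exact: sub_ge.
by rewrite (qform_val hl hs hxy).
Qed.

Lemma N_inC : inC (inv_op (@zero_op R n)).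
Proof.
split; [split|split; [split|]].
- by [].
- by move=> a x y xs ys -> ->; rewrite scaler0 addr0.
- by move=> x y xs ys -> ->; rewrite subrr dotv0r.
- move=> B hB hNB x xs hx.
  have := hB _ _ _ _ hx (hNB 0 (xs + x) erefl).
  rewrite opprD addrA subrr add0r subr0 dotvNl oppr_ge0 => h.
  apply: dotv_eq0; apply/eqP; rewrite eq_le h dotv_ge0 //.
- by move=> x y xs ys -> ->; rewrite !dotv0l.
Qed.

Lemma ind0_q : ind0 (R:=R) (n:=n) = qform (inv_op (@zero_op R n)).
Proof.
apply: funext => x; rewrite /ind0; case: eqP => [->|hx].
  have [l [_ s]] := N_inC.
  by rewrite (qform_val (y := 0) l s) // dotv0l mulr0.
by rewrite qform_nodom // => [[xs]].
Qed.

Lemma main_ind m (A : 'I_m -> oper R n) : (forall i, inC (A i)) ->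
  inC (inv_op (sum_op (fun i => inv_op (A i)))) /\
  infconv_fam (fun i => qform (A i)) = qform (inv_op (sum_op (fun i => inv_op (A i)))).
Proof.
elim: m A => [|m IH] A hA.
  by rewrite /sum_op /infconv_fam !big_ord0; split; [exact: N_inC | exact: ind0_q].
have [h1 h2] := IH (fun i => A (lift ord0 i)) (fun i => hA _).
rewrite /sum_op /infconv_fam !big_ord_recl.
rewrite /infconv_fam /sum_op in h1 h2.
rewrite h2; split; [exact: (par_inC (hA ord0) h1) | exact: (infconv2 (hA ord0) h1)].
Qed.

End Aux.

Theorem proposition4p29 (R : realType) (n m : nat) (hm : (0 < m)%N)
    (A : 'I_m -> oper R n)
    (hlin : forall i, linear_relation (A i))
    (hmax : forall i, maximally_monotone (A i))
    (hsym : forall i, symmetric_op (A i)) :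
  let f := infconv_fam (fun i => qform (A i)) in
  gen_lin_quad f /\
  subdiff f = inv_op (sum_op (fun i => inv_op (A i))).
Proof.
move=> f.
have [hC hf] := main_ind (fun i => conj (hlin i) (conj (hmax i) (hsym i))).
split; last by rewrite /f hf; exact: subdiff_q.
exists (inv_op (sum_op (fun i => inv_op (A i)))), 0, 0, 0.
split; first exact: hC.1.
split; first exact: hC.2.1.1.
by move=> x; rewrite subr0 dotv0l addr0 adde0 /f hf.
Qed.
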